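(* Let $\mathcal{M}=(S,E,T)$ be a trivially parametric Markov chain in which every non-target state has at least two successors. Then there is a trivially parametric Markov chain $\mathcal{N}=(S',E',T)$ with $S\subseteq S'$ and $|sE'|=2$ for all $s\in S'\setminus T$, such that for every graph-preserving valuation $\mathsf{val}$ of $\mathcal{M}$ there is a graph-preserving valuation $\mathsf{val}'$ of $\mathcal{N}$ with $\mathbb{P}^s_{\mathcal{M}^{\mathsf{val}}}[\Diamond\mathit{fin}]=\mathbb{P}^s_{\mathcal{N}^{\mathsf{val}'}}[\Diamond\mathit{fin}]$ for all $s\in S$, and conversely for every graph-preserving valuation $\mathsf{val}'$ of $\mathcal{N}$ there is a graph-preserving valuation $\mathsf{val}$ of $\mathcal{M}$ with the same equalities.
   Context: A trivially parametric Markov chain $\mathcal{M}=(S,E,T)$ consists of a finite set of states $S$, targets $T=\{\mathit{fin},\mathit{fail}\}$ with no outgoing edges, and edges $E\subseteq (S\setminus T)\times S$; $sE$ is the successor set of $s$. A graph-preserving valuation assigns to each non-target $s$ a probability distribution with full support on $sE$; the resulting Markov chain is $\mathcal{M}^{\mathsf{val}}$, and $\mathbb{P}^s_{\mathcal{M}^{\mathsf{val}}}[\Diamond\mathit{fin}]$ is the probability of reaching $\mathit{fin}$ from $s$ in it. *)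

(* Defs.v *)
From HB Require Import structures.
From mathcomp Require Import all_boot all_order all_algebra.
From mathcomp Require Import classical_sets reals.
Set Implicit Arguments. Unset Strict Implicit. Unset Printing Implicit Defensive.
Import Order.TTheory GRing.Theory Num.Theory.
Local Open Scope ring_scope.

(* A trivially parametric Markov chain (S, E, T) with T = {fin, fail}:
   S a finite type of states, fin <> fail, E : rel S the edge relation,
   and the targets have no outgoing edges. *)
Definition is_tpMC (S : finType) (fin fail : S) (E : rel S) : Prop :=
  fin != fail /\ (forall t, E fin t = false /\ E fail t = false).

Definition is_target (S : finType) (fin fail : S) (s : S) : bool :=
  (s == fin) || (s == fail).

Definition succs (S : finType) (E : rel S) (s : S) : {set S} := [set t | E s t].

Definition graph_preserving (R : realType) (S : finType) (fin fail : S)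
  (E : rel S) (val : S -> S -> R) : Prop :=
  forall s, ~~ is_target fin fail s ->
    (forall t, E s t -> 0 < val s t) /\
    (forall t, ~~ E s t -> val s t = 0) /\
    \sum_(t : S) val s t = 1.

Fixpoint reach_within (R : realType) (S : finType) (fin fail : S)
  (val : S -> S -> R) (n : nat) (s : S) : R :=
  if is_target fin fail s then (s == fin)%:R
  else match n with
       | 0 => 0
       | n'.+1 => \sum_(t : S) val s t * reach_within fin fail val n' t
       end.

Definition reach_prob (R : realType) (S : finType) (fin fail : S)
  (val : S -> S -> R) (s : S) : R :=
  sup (range (fun n => reach_within fin fail val n s)).

(* Main.v *)
Require Import Defs.
From HB Require Import structures.
From mathcomp Require Import all_boot all_order all_algebra.
From mathcomp Require Import classical_sets reals.
From mathcomp Require Import ring lra.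
Import Order.TTheory GRing.Theory Num.Theory.
Local Open Scope ring_scope.
Set Implicit Arguments. Unset Strict Implicit. Unset Printing Implicit Defensive.

Section Generic.
Variables (R : realType) (T : finType) (fi fa : T) (v : T -> T -> R).
Hypothesis v_ge0 : forall s t, ~~ is_target fi fa s -> 0 <= v s t.
Hypothesis v_sum : forall s, ~~ is_target fi fa s -> \sum_t v s t = 1.

Notation rw := (reach_within fi fa v).

Lemma rw_tgt n s : is_target fi fa s -> rw n s = (s == fi)%:R.
Proof. by case: n => [|n] /= ->. Qed.

Lemma rw0 s : ~~ is_target fi fa s -> rw 0 s = 0.
Proof. by move=> /negbTE /= ->. Qed.

Lemma rwS n s : ~~ is_target fi fa s -> rw n.+1 s = \sum_t v s t * rw n t.
Proof. by move=> /negbTE /= ->. Qed.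

Lemma rw_bnd n s : 0 <= rw n s <= 1.
Proof.
elim: n s => [|n IH] s; case: (boolP (is_target fi fa s)) => ht.
- by rewrite rw_tgt //; case: (s == fi); rewrite ?lexx ?ler01.
- by rewrite rw0 // lexx ler01.
- by rewrite rw_tgt //; case: (s == fi); rewrite ?lexx ?ler01.
- rewrite rwS //; apply/andP; split.
    by apply: sumr_ge0 => t _; apply: mulr_ge0; [exact: v_ge0| case/andP: (IH t)].
  rewrite -(v_sum ht); apply: ler_sum => t _.
  by case/andP: (IH t) => _ h; apply: ler_piMr => //; exact: v_ge0.
Qed.

Lemma rw_ge0 n s : 0 <= rw n s. Proof. by case/andP: (rw_bnd n s). Qed.
Lemma rw_le1 n s : rw n s <= 1. Proof. by case/andP: (rw_bnd n s). Qed.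

Lemma rw_mono n s : rw n s <= rw n.+1 s.
Proof.
elim: n s => [|n IH] s; case: (boolP (is_target fi fa s)) => ht.
- by rewrite !rw_tgt.
- by rewrite rw0 // rw_ge0.
- by rewrite !rw_tgt.
- rewrite !rwS //; apply: ler_sum => t _; apply: ler_wpM2l => //; exact: v_ge0.
Qed.

Lemma rw_monoD m n s : (m <= n)%N -> rw m s <= rw n s.
Proof.
move=> /subnKC <-; elim: (n - m)%N => [|k IH]; first by rewrite addn0.
by apply: le_trans IH _; rewrite addnS; apply: rw_mono.
Qed.

End Generic.

Lemma sup_range_eq (R : realType) (f g : nat -> R) (K : nat) :
  (forall n, f n <= 1) -> (forall n, g n <= 1) ->
  (forall n, f n <= g n) -> (forall n, g n <= f (n * K)%N) ->
  sup (range f) = sup (range g).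
Proof.
move=> f1 g1 fg gf.
have hub : forall h : nat -> R, (forall n, h n <= 1) -> has_ubound (range h).
  by move=> h h1; exists 1 => _ [n _ <-].
apply/eqP; rewrite eq_le; apply/andP; split.
- apply: ge_sup; first by exists (f 0); exists 0.
  move=> _ [n _ <-]; apply: le_trans (fg n) _; apply: (ub_le_sup (hub _ g1)).
  by exists n.
- apply: ge_sup; first by exists (g 0); exists 0.
  move=> _ [n _ <-]; apply: le_trans (gf n) _; apply: (ub_le_sup (hub _ f1)).
  by exists (n * K)%N.
Qed.
Section Constr.
Variables (S : finType) (fin fail : S) (E : rel S).

Definition S' : finType := (S + (S * {set S}))%type.
Definition pk (A : {set S}) : S := odflt fin [pick t in A].
Definition rmv (A : {set S}) := A :\ pk A.
Definition nxt (s : S) (A : {set S}) : S' :=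
  if (2 < #|A|)%N then inr (s, rmv A) else inl (pk (rmv A)).
Definition gedge s A (y : S') : bool := (y == inl (pk A)) || (y == nxt s A).
Definition E' (x y : S') : bool :=
  match x with
  | inl s => ~~ is_target fin fail s && gedge s (succs E s) y
  | inr (s, A) => if (2 <= #|A|)%N then gedge s A y
                  else (y == inl fin) || (y == inl fail)
  end.

Lemma pk_in (A : {set S}) : (0 < #|A|)%N -> pk A \in A.
Proof.
rewrite /pk; case: pickP => [t //|]; move=> h; rewrite card_gt0 => /set0Pn [t].
by rewrite h.
Qed.

Lemma card_rmv (A : {set S}) : (0 < #|A|)%N -> #|A| = (#|rmv A|).+1.
Proof. by move=> /pk_in h; rewrite (cardsD1 (pk A)) h. Qed.

Lemma in_rmv (A : {set S}) t : (t \in rmv A) = (t != pk A) && (t \in A).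
Proof. by rewrite !inE. Qed.

Lemma gedge_neq s (A : {set S}) : (2 <= #|A|)%N -> inl (pk A) != nxt s A.
Proof.
move=> h2; rewrite /nxt; case: ifP => // _.
have h0 : (0 < #|A|)%N by apply: leq_trans h2.
have h1 : (0 < #|rmv A|)%N by have := h2; rewrite (card_rmv h0).
move: (pk_in h1); rewrite in_rmv => /andP [hne _].
by apply/negP => /eqP [] /eqP; rewrite eq_sym (negbTE hne).
Qed.

Lemma gedge_card s (A : {set S}) : (2 <= #|A|)%N -> #|[set y | gedge s A y]| = 2%N.
Proof.
move=> h2; have -> : [set y | gedge s A y] = [set inl (pk A); nxt s A].
  by apply/setP => y; rewrite !inE.
by rewrite cards2 gedge_neq.
Qed.

End Constr.
Section Constr2.
Variables (S : finType) (fin fail : S) (E : rel S).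
Hypothesis hM : is_tpMC fin fail E.
Hypothesis h2 : forall s : S, ~~ is_target fin fail s -> (2 <= #|succs E s|)%N.

Local Notation S' := (S' S).
Local Notation E' := (E' fin fail E).
Local Notation fin' := (inl fin : S').
Local Notation fail' := (inl fail : S').

Lemma tgt_inl s : is_target fin' fail' (inl s) = is_target fin fail s.
Proof. by []. Qed.

Lemma tgt_inr p : is_target fin' fail' (inr p) = false.
Proof. by []. Qed.

Lemma tpMC' : is_tpMC fin' fail' E'.
Proof.
case: hM => hne ht; split; first by [].
move=> t; rewrite /= /is_target !eqxx /= orbT; split => //.
Qed.

Definition isg (x : S') s (A : {set S}) :=
  (2 <= #|A|)%N /\ forall y, E' x y = gedge fin s A y.

Lemma isg_top s : ~~ is_target fin fail s -> isg (inl s) s (succs E s).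
Proof. by move=> ht; split; [exact: h2 | move=> y /=; rewrite ht]. Qed.

Lemma isg_nxt x s A : isg x s A -> (2 < #|A|)%N -> isg (inr (s, rmv fin A)) s (rmv fin A).
Proof.
move=> [hA _] h3; have h0 : (0 < #|A|)%N by apply: leq_trans hA.
have hc : (2 <= #|rmv fin A|)%N by move: h3; rewrite (card_rmv fin h0).
by split => // y /=; rewrite hc.
Qed.

Lemma isg_nt x s A : isg x s A -> ~~ is_target fin' fail' x.
Proof.
case: x => [s'|p] [hA hE]; last by rewrite tgt_inr.
move: (hE (inl (pk fin A))); rewrite /gedge eqxx /= tgt_inl.
by case: (is_target fin fail s').
Qed.

Lemma card2' x : ~~ is_target fin' fail' x -> #|succs E' x| = 2%N.
Proof.
case: x => [s|[s A]].
  rewrite tgt_inl => ht; have [hA hE] := isg_top ht.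
  have -> : succs E' (inl s) = [set y | gedge fin s (succs E s) y].
    by apply/setP => y; rewrite !inE hE.
  exact: gedge_card.
rewrite /succs /= => _; case hA: (2 <= #|A|)%N; first exact: gedge_card.
have -> : [set y | (y == fin') || (y == fail')] = [set fin'; fail'].
  by apply/setP => y; rewrite !inE.
by case: hM => hne _; rewrite cards2 /= hne.
Qed.

End Constr2.
Section Val.
Variables (R : realType) (S : finType) (fin fail : S) (E : rel S).
Hypothesis hM : is_tpMC fin fail E.
Hypothesis h2 : forall s : S, ~~ is_target fin fail s -> (2 <= #|succs E s|)%N.

Local Notation S' := (S' S).
Local Notation E' := (E' fin fail E).
Local Notation fin' := (inl fin : S').
Local Notation fail' := (inl fail : S').
Local Notation pk := (pk fin).
Local Notation rmv := (rmv fin).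

Variable val' : S' -> S' -> R.
Hypothesis gp' : graph_preserving fin' fail' E' val'.

Lemma v_ge0' x y : ~~ is_target fin' fail' x -> 0 <= val' x y.
Proof.
move=> /gp' [hp [hz _]]; case: (boolP (E' x y)) => h; first exact/ltW/hp.
by rewrite hz.
Qed.

Lemma v_sum' x : ~~ is_target fin' fail' x -> \sum_y val' x y = 1.
Proof. by move=> /gp' [_ [_ ->]]. Qed.

Lemma card1_pk (B : {set S}) t : #|B| = 1%N -> (t \in B) = (t == pk B).
Proof.
move=> h; have := pk_in fin (A := B); rewrite h => /(_ isT).
by move/eqP: h => /cards1P [a ->]; rewrite !inE => /eqP ->.
Qed.

Lemma E'_inl x s A t : isg fin fail E x s A ->
  E' x (inl t) = if (2 < #|A|)%N then t == pk A else t \in A.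
Proof.
move=> [hA hE]; rewrite hE /gedge /nxt.
have h0 : (0 < #|A|)%N by apply: leq_trans hA.
case: ifP => h3 /=; first by rewrite orbF.
have h1 : #|rmv A| = 1%N.
  by apply/eqP; rewrite -eqSS -(card_rmv fin h0) eqn_leq hA leqNgt h3.
have e : forall a b : S, (inl a == inl b :> S') = (a == b) by [].
rewrite !e -(card1_pk t h1) in_rmv; case: (t =P pk A) => [->|_] //=.
by rewrite (pk_in fin h0).
Qed.

Lemma E'_inr x s A p : isg fin fail E x s A ->
  E' x (inr p) = (2 < #|A|)%N && (p == (s, rmv A)).
Proof. by move=> [hA hE]; rewrite hE /gedge /nxt; case: ifP. Qed.

Lemma gsum x s A (g : S' -> R) : isg fin fail E x s A ->
  \sum_y val' x y * g y = \sum_t val' x (inl t) * g (inl t) +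
    (if (2 < #|A|)%N then val' x (inr (s, rmv A)) * g (inr (s, rmv A)) else 0).
Proof.
move=> hg; have hnt := isg_nt hg; have [_ [hz _]] := gp' hnt.
rewrite big_sumType /=; congr (_ + _).
case: ifP => h3.
  rewrite (bigD1 (s, rmv A)) //= big1 ?addr0 // => p hp.
  by rewrite hz ?mul0r // (E'_inr _ hg) h3 /= hp.
by apply: big1 => p _; rewrite hz ?mul0r // (E'_inr _ hg) h3.
Qed.

Lemma gsum1 x s A : isg fin fail E x s A ->
  \sum_t val' x (inl t) +
    (if (2 < #|A|)%N then val' x (inr (s, rmv A)) else 0) = 1.
Proof.
move=> hg; rewrite -(v_sum' (isg_nt hg)).
under [RHS]eq_bigr do rewrite -[val' x _]mulr1.
rewrite (gsum _ hg); under [in RHS]eq_bigr do rewrite mulr1.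
by case: ifP; rewrite ?mulr1.
Qed.

Fixpoint exf (n : nat) (x : S') (s : S) (A : {set S}) (t : S) : R :=
  val' x (inl t) + match n with
    | n'.+1 => if (2 < #|A|)%N then
                 val' x (inr (s, rmv A)) * exf n' (inr (s, rmv A)) s (rmv A) t
               else 0
    | 0 => 0 end.

Definition ex (x : S') (s : S) (A : {set S}) (t : S) := exf #|A| x s A t.

Lemma exE x s (A : {set S}) t : (0 < #|A|)%N -> ex x s A t = val' x (inl t) +
  (if (2 < #|A|)%N then val' x (inr (s, rmv A)) * ex (inr (s, rmv A)) s (rmv A) t
   else 0).
Proof. by move=> h; rewrite /ex {1}(card_rmv fin h). Qed.

Local Notation rw' := (reach_within fin' fail' val').

Lemma rwN_ge0 n y : 0 <= rw' n y.
Proof. exact: (rw_ge0 v_ge0' v_sum'). Qed.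

Lemma rwN_mono n y : rw' n y <= rw' n.+1 y.
Proof. exact: (rw_mono v_ge0' v_sum'). Qed.

Lemma rwN_monoD m n y : (m <= n)%N -> rw' m y <= rw' n y.
Proof. exact: (rw_monoD v_ge0' v_sum'). Qed.

Lemma ex_facts n x s (A : {set S}) : #|A| = n -> isg fin fail E x s A ->
  [/\ (forall t, t \in A -> 0 < ex x s A t), (forall t, t \notin A -> ex x s A t = 0)
    & \sum_t ex x s A t = 1].
Proof.
elim: n x A => [|n IH] x A hn hg; first by case: hg; rewrite hn.
have [hA _] := hg; have h0 : (0 < #|A|)%N by rewrite hn.
have hnt := isg_nt hg; have [hp [hz _]] := gp' hnt.
have hsum := gsum1 hg.
case h3: (2 < #|A|)%N.
- have hg' := isg_nxt hg h3.
  have hn' : #|rmv A| = n by move: hn; rewrite (card_rmv fin h0) => -[].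
  have [IH1 IH2 IH3] := IH _ _ hn' hg'.
  set c := val' x (inr (s, rmv A)).
  have hc : 0 < c by apply: hp; rewrite (E'_inr _ hg) h3 eqxx.
  have hv : forall t, t != pk A -> val' x (inl t) = 0.
    by move=> t ht; apply: hz; rewrite (E'_inl _ hg) h3 (negbTE ht).
  have hvp : 0 < val' x (inl (pk A)) by apply: hp; rewrite (E'_inl _ hg) h3 eqxx.
  have hex : forall t, ex x s A t = val' x (inl t) + c * ex (inr (s, rmv A)) s (rmv A) t.
    by move=> t; rewrite exE // h3.
  have ex'0 : forall t, 0 <= ex (inr (s, rmv A)) s (rmv A) t.
    by move=> t; case: (boolP (t \in rmv A)) => h; [exact/ltW/IH1 | rewrite IH2].
  split.
  + move=> t tA; rewrite hex; case: (t =P pk A) => [->|/eqP ht].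
      by apply: (lt_le_trans hvp); rewrite lerDl; apply: mulr_ge0 (ltW hc) (ex'0 _).
    by rewrite hv // add0r; apply: mulr_gt0 hc (IH1 _ _); rewrite in_rmv ht tA.
  + move=> t tA; rewrite hex hv ?IH2 ?mulr0 ?addr0 //.
      by rewrite in_rmv negb_and tA orbT.
    by apply: contraNneq tA => ->; rewrite (pk_in fin h0).
  + rewrite (eq_bigr _ (fun t _ => hex t)) big_split /= -mulr_sumr IH3 mulr1.
    by move: hsum; rewrite h3.
- have hex : forall t, ex x s A t = val' x (inl t) by move=> t; rewrite exE // h3 addr0.
  split.
  + by move=> t tA; rewrite hex; apply: hp; rewrite (E'_inl _ hg) h3.
  + by move=> t tA; rewrite hex; apply: hz; rewrite (E'_inl _ hg) h3.
  + by rewrite (eq_bigr _ (fun t _ => hex t)); move: hsum; rewrite h3 addr0.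
Qed.

Lemma ex_ge0 x s A t : isg fin fail E x s A -> 0 <= ex x s A t.
Proof.
move=> hg; have [h1 h2' _] := ex_facts (erefl #|A|) hg.
by case: (boolP (t \in A)) => h; [exact/ltW/h1 | rewrite h2'].
Qed.

Lemma G2 n x s (A : {set S}) : #|A| = n -> isg fin fail E x s A ->
  forall m, rw' m x <= \sum_t ex x s A t * rw' m (inl t).
Proof.
elim: n x A => [|n IH] x A hn hg m; first by case: hg; rewrite hn.
have [hA _] := hg; have h0 : (0 < #|A|)%N by rewrite hn.
have hnt := isg_nt hg.
case: m => [|m].
  rewrite rw0 //; apply: sumr_ge0 => t _; apply: mulr_ge0; [exact: ex_ge0 | exact: rwN_ge0].
rewrite rwS // (gsum _ hg).
under [in leRHS]eq_bigr => t _ do rewrite (exE _ _ _ h0).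
case h3: (2 < #|A|)%N; last first.
  rewrite addr0; under [in leRHS]eq_bigr => t _ do rewrite addr0.
  apply: ler_sum => t _; apply: ler_wpM2l; [exact: v_ge0' | exact: rwN_mono].
have hg' := isg_nxt hg h3.
have hn' : #|rmv A| = n by move: hn; rewrite (card_rmv fin h0) => -[].
under [in leRHS]eq_bigr => t _ do rewrite mulrDl -mulrA.
rewrite big_split /= -mulr_sumr; apply: lerD.
  apply: ler_sum => t _; apply: ler_wpM2l; [exact: v_ge0' | exact: rwN_mono].
apply: ler_wpM2l; first exact: v_ge0'.
apply: le_trans (IH _ _ hn' hg' m) _.
apply: ler_sum => t _; apply: ler_wpM2l; [exact: ex_ge0 hg' | exact: rwN_mono].
Qed.

Lemma G3 n x s (A : {set S}) : #|A| = n -> isg fin fail E x s A ->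
  forall m, \sum_t ex x s A t * rw' m (inl t) <= rw' (m + #|A|) x.
Proof.
elim: n x A => [|n IH] x A hn hg m; first by case: hg; rewrite hn.
have [hA _] := hg; have h0 : (0 < #|A|)%N by rewrite hn.
have hnt := isg_nt hg.
rewrite [in leRHS](card_rmv fin h0) addnS rwS // (gsum _ hg).
under eq_bigr => t _ do rewrite (exE _ _ _ h0).
case h3: (2 < #|A|)%N; last first.
  rewrite addr0; under eq_bigr => t _ do rewrite addr0.
  apply: ler_sum => t _; apply: ler_wpM2l; [exact: v_ge0' | exact: rwN_monoD (leq_addr _ _)].
have hg' := isg_nxt hg h3.
have hn' : #|rmv A| = n by move: hn; rewrite (card_rmv fin h0) => -[].
under eq_bigr => t _ do rewrite mulrDl -mulrA.
rewrite big_split /= -mulr_sumr; apply: lerD.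
  apply: ler_sum => t _; apply: ler_wpM2l; [exact: v_ge0' | exact: rwN_monoD (leq_addr _ _)].
apply: ler_wpM2l; first exact: v_ge0'.
exact: (IH _ _ hn' hg' m).
Qed.

Lemma G2' x s (A : {set S}) : isg fin fail E x s A ->
  forall m, rw' m.+1 x <= \sum_t ex x s A t * rw' m (inl t).
Proof.
move=> hg m; have [hA _] := hg; have h0 : (0 < #|A|)%N by apply: leq_trans hA.
have hnt := isg_nt hg.
rewrite rwS // (gsum _ hg).
under [in leRHS]eq_bigr => t _ do rewrite (exE _ _ _ h0).
case h3: (2 < #|A|)%N; last first.
  by rewrite addr0; under [in leRHS]eq_bigr => t _ do rewrite addr0.
have hg' := isg_nxt hg h3.
under [in leRHS]eq_bigr => t _ do rewrite mulrDl -mulrA.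
rewrite big_split /= -mulr_sumr; apply: lerD => //.
apply: ler_wpM2l; first exact: v_ge0'.
exact: (G2 (erefl _) hg' m).
Qed.

Variable val : S -> S -> R.
Hypothesis gp : graph_preserving fin fail E val.
Hypothesis hval : forall s t, ~~ is_target fin fail s ->
  val s t = ex (inl s) s (succs E s) t.

Local Notation rwM := (reach_within fin fail val).

Lemma v_ge0M s t : ~~ is_target fin fail s -> 0 <= val s t.
Proof.
move=> /gp [hp [hz _]]; case: (boolP (E s t)) => h; first exact/ltW/hp.
by rewrite hz.
Qed.

Lemma v_sumM s : ~~ is_target fin fail s -> \sum_t val s t = 1.
Proof. by move=> /gp [_ [_ ->]]. Qed.

Lemma stepB n s : rw' n (inl s) <= rwM n s.
Proof.
elim: n s => [|n IH] s; case: (boolP (is_target fin fail s)) => ht.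
- by rewrite rw_tgt // rw_tgt.
- by rewrite rw0 // rw0.
- by rewrite rw_tgt // rw_tgt.
- apply: le_trans (G2' (isg_top h2 ht) n) _.
  rewrite rwS //; apply: ler_sum => t _; rewrite -hval //.
  by apply: ler_wpM2l; [exact: v_ge0M | exact: IH].
Qed.

Lemma stepA n s : rwM n s <= rw' (n * #|S|) (inl s).
Proof.
elim: n s => [|n IH] s; case: (boolP (is_target fin fail s)) => ht.
- by rewrite rw_tgt // rw_tgt.
- by rewrite rw0 // rwN_ge0.
- by rewrite rw_tgt // rw_tgt.
- rewrite rwS //; have hg := isg_top h2 ht.
  apply: le_trans (rwN_monoD _ (_ : (n * #|S| + #|succs E s| <= n.+1 * #|S|)%N)).
    apply: le_trans (G3 (erefl _) hg _); apply: ler_sum => t _; rewrite -hval //.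
    by apply: ler_wpM2l; [exact: v_ge0M | exact: IH].
  by rewrite mulSn addnC leq_add2r max_card.
Qed.

Lemma reach_eq s : reach_prob fin fail val s = reach_prob fin' fail' val' (inl s).
Proof.
rewrite /reach_prob; symmetry; apply: (@sup_range_eq _ _ _ #|S|).
- by move=> n; exact: (rw_le1 v_ge0' v_sum').
- by move=> n; exact: (rw_le1 v_ge0M v_sumM).
- by move=> n; exact: stepB.
- by move=> n; exact: stepA.
Qed.

End Val.
Section Fwd.
Variables (R : realType) (S : finType) (fin fail : S) (E : rel S).
Hypothesis hM : is_tpMC fin fail E.
Hypothesis h2 : forall s : S, ~~ is_target fin fail s -> (2 <= #|succs E s|)%N.

Local Notation S' := (S' S).
Local Notation E' := (E' fin fail E).
Local Notation fin' := (inl fin : S').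
Local Notation fail' := (inl fail : S').
Local Notation pk := (pk fin).
Local Notation rmv := (rmv fin).

Variable val : S -> S -> R.
Hypothesis gp : graph_preserving fin fail E val.

Definition qv s (A : {set S}) : R :=
  let q := val s (pk A) / \sum_(t in A) val s t in
  if [&& (2 <= #|A|)%N, 0 < q & q < 1] then q else 2^-1.

Definition gA (x : S') : S * {set S} :=
  match x with inl s => (s, succs E s) | inr p => p end.

Definition val' (x y : S') : R :=
  if E' x y then
    (if y == inl (pk (gA x).2) then qv (gA x).1 (gA x).2 else 1 - qv (gA x).1 (gA x).2)
  else 0.

Lemma half_bnd : 0 < (2^-1 : R) < 1.
Proof. by apply/andP; split; lra. Qed.

Lemma qv_bnd s (A : {set S}) : 0 < qv s A < 1.
Proof.
rewrite /qv; case: ifP => [/and3P [_ -> ->] //|_]; exact: half_bnd.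
Qed.

Lemma qv_half s (A : {set S}) : (#|A| < 2)%N -> qv s A = 2^-1.
Proof. by rewrite /qv ltnNge => /negbTE ->. Qed.

Lemma sum2 (a b : S') (F : S' -> R) : a != b ->
  \sum_(y in [set a; b]) F y = F a + F b.
Proof.
by move=> hab; rewrite big_setU1 ?big_set1 // inE.
Qed.

Lemma gp' : graph_preserving fin' fail' E' val'.
Proof.
move=> x hx; have /andP [q0 q1] := qv_bnd (gA x).1 (gA x).2.
split; [|split].
- by move=> y hy; rewrite /val' hy; case: ifP => _ //; rewrite subr_gt0.
- by move=> y hy; rewrite /val' (negbTE hy).
- rewrite /val' -big_mkcond /=.
  case: x hx q0 q1 => [s | [s A]] hx q0 q1 /=.
  + rewrite tgt_inl in hx; have [hA hE] := isg_top h2 hx.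
    rewrite (eq_bigl (fun y => y \in [set inl (pk (succs E s)); nxt fin s (succs E s)])); last first.
      by move=> y; rewrite !inE /= hx.
    rewrite sum2 ?gedge_neq // eqxx.
    have /negbTE hn := gedge_neq fin s hA; rewrite eq_sym in hn; rewrite hn; lra.
  + case hA: (2 <= #|A|)%N.
    * rewrite (eq_bigl (fun y => y \in [set inl (pk A); nxt fin s A])); last first.
        by move=> y; rewrite !inE.
      rewrite sum2 ?gedge_neq // eqxx.
      have /negbTE hn := gedge_neq fin s hA; rewrite eq_sym in hn; rewrite hn; lra.
    * rewrite (eq_bigl (fun y => y \in [set fin'; fail'])); last first.
        by move=> y; rewrite !inE.
      rewrite qv_half; last by rewrite ltnNge hA.
      rewrite sum2; last by case: hM.
      by case: ifP; case: ifP; lra.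
Qed.

Lemma sum_pos (B : {set S}) (F : S -> R) :
  (forall u, u \in B -> 0 < F u) -> (0 < #|B|)%N -> 0 < \sum_(u in B) F u.
Proof.
move=> hF hB; have ha := pk_in fin hB.
rewrite (big_setD1 (pk B)) //=.
have : 0 <= \sum_(u in B :\ pk B) F u.
  by apply: sumr_ge0 => u; rewrite !inE => /andP [_ hu]; exact/ltW/hF.
by have := hF _ ha; lra.
Qed.

Lemma ex_fwd n x s (A : {set S}) : #|A| = n -> isg fin fail E x s A ->
  gA x = (s, A) -> A \subset succs E s -> ~~ is_target fin fail s ->
  forall t, ex fin val' x s A t = (t \in A)%:R * val s t / \sum_(u in A) val s u.
Proof.
elim: n x A => [|n IH] x A hn hg hgA hsub hs t; first by case: hg; rewrite hn.
have [hA _] := hg; have h0 : (0 < #|A|)%N by rewrite hn.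
have [vp [vz _]] := gp hs.
have pos : forall u, u \in A -> 0 < val s u.
  by move=> u hu; apply: vp; have := fintype.subsetP hsub u hu; rewrite inE.
have hpA := pk_in fin h0.
have h1 : (0 < #|rmv A|)%N by move: hA; rewrite (card_rmv fin h0).
have hm : \sum_(u in A) val s u = val s (pk A) + \sum_(u in rmv A) val s u.
  by rewrite (big_setD1 (pk A)).
have m'pos : 0 < \sum_(u in rmv A) val s u.
  by apply: sum_pos h1 => u; rewrite in_rmv => /andP [_ hu]; exact: pos.
move: hm m'pos; set m := \sum_(u in A) val s u; set m' := \sum_(u in rmv A) val s u.
move=> hm m'pos.
have vpk := pos _ hpA.
have mpos : 0 < m by rewrite hm; lra.
have hq : qv s A = val s (pk A) / m.
  rewrite /qv -/m hA /= divr_gt0 //= ltr_pdivrMr // mul1r hm.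
  by rewrite ltrDl m'pos.
have e1 : 1 - val s (pk A) / m = m' / m.
  by rewrite hm; field; rewrite hm in mpos; apply/lt0r_neq0.
have hv : forall u, val' x (inl u) = if E' x (inl u) then
      (if u == pk A then val s (pk A) / m else m' / m) else 0.
  by move=> u; rewrite /val' hgA /= hq -e1.
rewrite (exE fin val' x s t h0) hv (E'_inl _ hg).
case h3: (2 < #|A|)%N.
- have hg' := isg_nxt hg h3.
  have hn' : #|rmv A| = n by move: hn; rewrite (card_rmv fin h0) => -[].
  have hsub' : rmv A \subset succs E s.
    by apply: (fintype.subset_trans _ hsub); apply/fintype.subsetP => u; rewrite in_rmv => /andP [].
  rewrite (IH _ _ hn' hg' erefl hsub' hs t) -/m'.
  have -> : val' x (inr (s, rmv A)) = m' / m.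
    by rewrite /val' (E'_inr _ hg) h3 eqxx /= hgA /= hq.
  case: (t =P pk A) => [->|/eqP ht].
    by rewrite in_rmv eqxx /= hpA !mul0r mulr0 addr0 mul1r.
  rewrite in_rmv ht /= add0r; field.
  by apply/andP; split; apply/lt0r_neq0.
- have hc1 : #|rmv A| = 1%N.
    by apply/eqP; rewrite -eqSS -(card_rmv fin h0) eqn_leq hA leqNgt h3.
  rewrite addr0; case: (boolP (t \in A)) => htA; last by rewrite mul0r mul0r.
  rewrite mul1r; case: (t =P pk A) => [->|/eqP ht] //.
  have htr : t \in rmv A by rewrite in_rmv ht htA.
  have em' : m' = val s t.
    move/eqP: hc1 => /cards1P [a ha]; rewrite /m' ha big_set1.
    by move: htr; rewrite ha inE => /eqP ->.
  by rewrite em'.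
Qed.

Lemma ex_top s t : ~~ is_target fin fail s ->
  ex fin val' (inl s) s (succs E s) t = val s t.
Proof.
move=> hs; have [_ [vz vs]] := gp hs.
rewrite (ex_fwd (erefl _) (isg_top h2 hs) erefl (subxx _) hs).
have -> : \sum_(u in succs E s) val s u = 1.
  rewrite -vs big_mkcond /=; apply: eq_bigr => u _; rewrite inE.
  by case: (boolP (E s u)) => // h; rewrite vz.
rewrite divr1 inE; case: (boolP (E s t)) => h; first by rewrite mul1r.
by rewrite vz // mulr0.
Qed.

End Fwd.

Theorem lemma13 (S : finType) (fin fail : S) (E : rel S) :
  is_tpMC fin fail E ->
  (forall s : S, ~~ is_target fin fail s -> (2 <= #|succs E s|)%N) ->
  exists (S' : finType) (fin' fail' : S') (E' : rel S') (emb : S -> S'),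
    [/\ is_tpMC fin' fail' E',
        [/\ injective emb, emb fin = fin' & emb fail = fail'],
        (forall s' : S', ~~ is_target fin' fail' s' -> #|succs E' s'| = 2%N)
      & forall R : realType,
        (forall val : S -> S -> R, graph_preserving fin fail E val ->
           exists val' : S' -> S' -> R, graph_preserving fin' fail' E' val' /\
             forall s : S, reach_prob fin fail val s = reach_prob fin' fail' val' (emb s)) /\
        (forall val' : S' -> S' -> R, graph_preserving fin' fail' E' val' ->
           exists val : S -> S -> R, graph_preserving fin fail E val /\
             forall s : S, reach_prob fin fail val s = reach_prob fin' fail' val' (emb s))].
Proof.
move=> hM h2.
exists (S' S), (inl fin), (inl fail), (E' fin fail E), inl.
split.
- exact: tpMC' hM.
- by split => // a b [].
- exact: card2' hM h2.
- move=> R; split.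
  + move=> val gp.
    have gpv := gp' hM h2 val.
    exists (val' fin fail E val); split => //.
    apply: (reach_eq h2 gpv gp) => s t hs.
    by rewrite (ex_top h2 gp t hs).
  + move=> v' gpv.
    pose val := fun s t => if is_target fin fail s then 0
                           else ex fin v' (inl s) s (succs E s) t.
    have gpM : graph_preserving fin fail E val.
      move=> s hs; have [e1 e2 e3] := ex_facts gpv (erefl _) (isg_top h2 hs).
      rewrite /val (negbTE hs); split; [|split] => //.
      * by move=> t ht; apply: e1; rewrite inE.
      * by move=> t ht; apply: e2; rewrite inE.
    exists val; split => //.
    by apply: (reach_eq h2 gpv gpM) => s t hs; rewrite /val (negbTE hs).
Qed.
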